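(* Let $T=(T_a,T_b)$ be a rooted binary phylogenetic $X$-tree with strictly positive edge lengths and maximal pendant subtrees $T_a,T_b$ with leaf sets $X_a,X_b$. Let $X'\subset X$ be such that $X_a\not\subseteq X'$ and $X_b\not\subseteq X'$, and let $\widetilde T=T_{\widetilde X}$ with $\widetilde X=X\setminus X'$. Then $FP_T(x)\leq FP_{\widetilde T}(x)$ for all $x\in\widetilde X$.
   Context: A rooted binary phylogenetic $X$-tree ($X$ finite, $|X|\ge 2$ here) is a rooted tree whose root $\rho$ has in-degree 0 and out-degree 2, all edges directed away from $\rho$, all other interior vertices have in-degree 1 and out-degree 2, and whose leaves are bijectively labelled by $X$. $T=(T_a,T_b)$ denotes the decomposition into the two maximal pendant subtrees rooted at the children $a,b$ of $\rho$, with leaf sets $X_a,X_b$. Every edge $e$ has a strictly positive length $\lambda_e$. The Fair Proportion index of $x\in X$ is $FP_T(x)=\sum_{e\in P(T;\rho,x)}\lambda_e/D_e$, where $P(T;\rho,x)$ is the path from $\rho$ to $x$ and $D_e$ is the number of leaves descended from $e$. For $Y\subseteq X$, the induced subtree $T_Y$ is obtained from the minimal subtree of $T$ connecting $Y$ by suppressing all non-root vertices of in- and out-degree 1, adding the lengths of merged edges; if the root then has out-degree 1, it and its incident edge are deleted. *)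

(* Defs.v *)
From HB Require Import structures.
From mathcomp Require Import all_boot all_order all_algebra.
Set Implicit Arguments. Unset Strict Implicit. Unset Printing Implicit Defensive.
Import Order.TTheory GRing.Theory Num.Theory.
Local Open Scope ring_scope.

(* A rooted binary tree whose leaves are labelled by elements of L.
   [Node l1 t1 l2 t2] is an interior vertex with two child subtrees t1, t2;
   l1 (resp. l2) is the length of the edge from this vertex to the root of t1
   (resp. t2).  Every edge of the tree is recorded exactly once this way. *)
Inductive ptree (R L : Type) : Type :=
| Leaf of L
| Node of R & ptree R L & R & ptree R L.

Arguments Leaf {R L} _.
Arguments Node {R L} _ _ _ _.

Section Defs.
Variables (R : realFieldType) (L : eqType).

Fixpoint leaves (t : ptree R L) : seq L :=
  match t with
  | Leaf x => [:: x]
  | Node _ t1 _ t2 => leaves t1 ++ leaves t2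
  end.

Fixpoint pos_lengths (t : ptree R L) : Prop :=
  match t with
  | Leaf _ => True
  | Node l1 t1 l2 t2 => 0 < l1 /\ pos_lengths t1 /\ 0 < l2 /\ pos_lengths t2
  end.

(* rooted binary phylogenetic X-tree with |X| >= 2 and positive edge lengths:
   root of out-degree 2 (a Node), leaves bijectively labelled (uniq labels). *)
Definition phylo_tree (t : ptree R L) : Prop :=
  [/\ (if t is Node _ _ _ _ then True else False), uniq (leaves t) & pos_lengths t].

(* Fair Proportion index: sum over the edges e on the path from the root to x
   of lambda_e / D_e, D_e = number of leaves below e. *)
Fixpoint FP (t : ptree R L) (x : L) : R :=
  match t with
  | Leaf _ => 0
  | Node l1 t1 l2 t2 =>
      if x \in leaves t1 then l1 / (size (leaves t1))%:R + FP t1 x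
      else if x \in leaves t2 then l2 / (size (leaves t2))%:R + FP t2 x
      else 0
  end.

(* Returns None if no
   leaf of Y is below; otherwise Some (a, s) where s is the induced subtree
   (degree-2 vertices suppressed, merged edge lengths added) and a is the total
   length of suppressed edges that must be added to the edge entering s. *)
Fixpoint restrict (Y : pred L) (t : ptree R L) : option (R * ptree R L) :=
  match t with
  | Leaf x => if Y x then Some (0, Leaf x) else None
  | Node l1 t1 l2 t2 =>
      match restrict Y t1, restrict Y t2 with
      | Some (a1, s1), Some (a2, s2) => Some (0, Node (l1 + a1) s1 (l2 + a2) s2)
      | Some (a1, s1), None => Some (l1 + a1, s1)
      | None, Some (a2, s2) => Some (l2 + a2, s2)
      | None, None => None
      end
  end.

(* Induced subtree T_Y.  A leftover length above the (new) root corresponds to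
   the deleted root edge and is discarded.  If Y contains no leaf of t the
   result is irrelevant (we return t). *)
Definition induced (t : ptree R L) (Y : pred L) : ptree R L :=
  match restrict Y t with
  | Some (_, s) => s
  | None => t
  end.

End Defs.

(* Main.v *)
Require Import Defs.
From mathcomp Require Import all_boot all_order all_algebra.
From mathcomp Require Import lra.
Import Order.TTheory GRing.Theory Num.Theory.
Local Open Scope ring_scope.

Section Aux.
Variables (R : realFieldType) (L : eqType).

Lemma restrict_spec (Y : pred L) {t : ptree R L} : pos_lengths t ->
  match restrict Y t with
  | Some (a, s) => leaves s = filter Y (leaves t) /\ 0 <= a
  | None => filter Y (leaves t) = [::]
  end.
Proof.
elim: t => [x|l1 t1 IH1 l2 t2 IH2] /=.
  by case: (Y x).
move=> [h1 [p1 [h2 p2]]].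
move: (IH1 p1) (IH2 p2).
case: (restrict Y t1) => [[a1 s1]|]; case: (restrict Y t2) => [[a2 s2]|] /=;
  rewrite filter_cat.
- by move=> [-> _] [-> _].
- move=> [-> ha] ->; rewrite cats0; split=> //.
  by apply: addr_ge0 => //; apply: ltW.
- move=> -> [-> ha]; split=> //.
  by apply: addr_ge0 => //; apply: ltW.
- by move=> -> ->.
Qed.

Lemma restrict_some (Y : pred L) {t : ptree R L} {x} : pos_lengths t ->
  x \in leaves t -> Y x -> exists a s, restrict Y t = Some (a, s).
Proof.
move=> p xt yx; move: (restrict_spec Y p).
case: (restrict Y t) => [[a s]|]; first by eauto.
move=> h; have : x \in filter Y (leaves t) by rewrite mem_filter yx xt.
by rewrite h.
Qed.

Lemma div_mono (l : R) (m n : nat) : 0 <= l -> (0 < m)%N -> (m <= n)%N ->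
  l / n%:R <= l / m%:R.
Proof.
move=> hl hm hmn; apply: ler_wpM2l => //.
have hn : (0 < n)%N by apply: leq_trans hmn.
rewrite lef_pV2 ?posrE ?ltr0n // ler_nat //.
Qed.

Lemma key (Y : pred L) (t : ptree R L) : pos_lengths t -> uniq (leaves t) ->
  forall x a s l, restrict Y t = Some (a, s) -> x \in leaves t -> Y x -> 0 <= l ->
  l / (size (leaves t))%:R + FP t x <= (l + a) / (size (leaves s))%:R + FP s x.
Proof.
elim: t => [y|l1 t1 IH1 l2 t2 IH2] /=.
  move=> _ _ x a s l; case: (Y y) => //= [[<- <-]].
  by rewrite addr0 !addr0.
move=> [h1 [p1 [h2 p2]]]; rewrite cat_uniq => /and3P [u1 dis u2].
move=> x a s l hr xt yx hl.
have sp := restrict_spec Y (t := Node l1 t1 l2 t2) (conj h1 (conj p1 (conj h2 p2))).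
change (restrict Y (Node l1 t1 l2 t2) = Some (a, s)) in hr.
rewrite hr in sp; case: sp => sleaves ha.
have xs : x \in leaves s by rewrite sleaves mem_filter yx xt.
have sz : (size (leaves s) <= size (leaves (Node l1 t1 l2 t2)))%N.
  by rewrite sleaves size_filter count_size.
have szpos : (0 < size (leaves s))%N by case: (leaves s) xs.
have hd : l / (size (leaves (Node l1 t1 l2 t2)))%:R <= l / (size (leaves s))%:R.
  exact: div_mono.
move: hr xt; rewrite /= mem_cat.
case E1: (x \in leaves t1) => /= hr xt2.
  have [a1 [s1 e1]] := restrict_some Y p1 E1 yx.
  have ls1 := restrict_spec Y p1; rewrite e1 in ls1; case: ls1 => ls1 ha1.
  have xs1 : x \in leaves s1 by rewrite ls1 mem_filter yx E1.
  have I1 := IH1 p1 u1 x a1 s1 l1 e1 E1 yx (ltW h1).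
  move: hr; rewrite e1.
  case: (restrict Y t2) => [[a2 s2]|] [ea es]; subst a s => /=; rewrite /= in hd.
    rewrite xs1 addr0; lra.
  rewrite mulrDl; lra.
have x2 : x \in leaves t2 by rewrite xt2.
rewrite x2.
have [a2 [s2 e2]] := restrict_some Y p2 x2 yx.
have ls2 := restrict_spec Y p2; rewrite e2 in ls2; case: ls2 => ls2 ha2.
have I2 := IH2 p2 u2 x a2 s2 l2 e2 x2 yx (ltW h2).
have xs2 : x \in leaves s2 by rewrite ls2 mem_filter yx x2.
move: hr; rewrite e2.
case E: (restrict Y t1) => [[a1 s1]|] [ea es]; subst a s => /=; rewrite /= in hd.
  have ls1 := restrict_spec Y p1; rewrite E in ls1; case: ls1 => ls1 ha1.
  have xs1 : (x \in leaves s1) = false by rewrite ls1 mem_filter E1 andbF.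
  rewrite xs1 xs2 addr0; lra.
rewrite mulrDl; lra.
Qed.

End Aux.

Theorem lemma1 (R : realFieldType) (L : eqType)
    (la lb : R) (Ta Tb : ptree R L) (X' : seq L) :
  phylo_tree (Node la Ta lb Tb) ->
  {subset X' <= leaves (Node la Ta lb Tb)} ->
  ~ {subset leaves Ta <= X'} ->
  ~ {subset leaves Tb <= X'} ->
  let T := Node la Ta lb Tb in
  let Xt := [pred x | (x \in leaves T) && (x \notin X')] in
  forall x : L, x \in Xt -> FP T x <= FP (induced T Xt) x.
Proof.
move=> [_ u p] _ na nb T Xt x xX.
case: p => h1 [p1 [h2 p2]].
move: u; rewrite /= cat_uniq => /and3P [u1 dis u2].
have [ya [ya1 ya2]] : exists y, y \in leaves Ta /\ y \notin X'.
  case: (boolP (has (fun y => y \notin X') (leaves Ta))) => [/hasP [y ? ?]|/hasPn h].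
    by exists y.
  by exfalso; apply: na => y /h; rewrite negbK.
have [yb [yb1 yb2]] : exists y, y \in leaves Tb /\ y \notin X'.
  case: (boolP (has (fun y => y \notin X') (leaves Tb))) => [/hasP [y ? ?]|/hasPn h].
    by exists y.
  by exfalso; apply: nb => y /h; rewrite negbK.
have Xya : Xt ya by rewrite /Xt /T /= mem_cat ya1 ya2.
have Xyb : Xt yb by rewrite /Xt /T /= mem_cat yb1 orbT yb2.
have [a1 [s1 e1]] := @restrict_some _ _ Xt Ta ya p1 ya1 Xya.
have [a2 [s2 e2]] := @restrict_some _ _ Xt Tb yb p2 yb1 Xyb.
have ls1 := @restrict_spec _ _ Xt Ta p1; rewrite e1 in ls1; case: ls1 => ls1 ha1.
have ls2 := @restrict_spec _ _ Xt Tb p2; rewrite e2 in ls2; case: ls2 => ls2 ha2.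
have Xx : Xt x by exact: xX.
rewrite /induced /T /= e1 e2 /=.
case E1: (x \in leaves Ta).
  have xs1 : x \in leaves s1 by rewrite ls1 mem_filter Xx E1.
  rewrite xs1.
  exact: (@key _ _ Xt Ta p1 u1 x a1 s1 la e1 E1 Xx (ltW h1)).
have xs1 : (x \in leaves s1) = false by rewrite ls1 mem_filter E1 andbF.
rewrite xs1.
have x2 : x \in leaves Tb.
  by move: xX; rewrite /Xt inE /= mem_cat E1 /= => /andP [].
have xs2 : x \in leaves s2 by rewrite ls2 mem_filter Xx x2.
rewrite x2 xs2.
exact: (@key _ _ Xt Tb p2 u2 x a2 s2 lb e2 x2 Xx (ltW h2)).
Qed.
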